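(* Let $q\in\mathbb{N}\setminus\{1\}$ and let $X$ be the geometric armadillo tail with parameter $r=\frac1q$. Then there exists a saddle connection, called $\mathrm{bsc}_2'$, namely the straight-line trajectory of slope $\frac{q}{2q-1}$ starting at the singular point $(1+\frac1q,0)$ (the lower right vertex of $\square_2$): this trajectory reaches the singularity again after finite length without passing through it in between.
   Context: Set $l_k=q^{-(k-1)}$, $s_k=l_1+\dots+l_k$ ($s_0=0$), and $\square_k=[s_{k-1},s_k]\times[0,l_k]\subset\mathbb{R}^2$. The geometric armadillo tail with parameter $\frac1q$ is obtained from $P=\bigcup_k\square_k$ by gluing the top edge of each $\square_k$ to its bottom edge by vertical translation, and for each $k\ge1$ gluing $\{s_k\}\times[l_{k+1},l_k]$ by horizontal translation to $\{0\}\times[l_{k+1},l_k]$; then taking the metric completion, in which all vertices of $P$ become a single wild singularity. Trajectories and slopes are computed in the polygonal representation $P$ with these gluings. A saddle connection is a closed straight-line segment from the singularity to itself with no singular point in its interior. *)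

(* Defs.v *)
From Stdlib Require Import Reals Lra.
Open Scope R_scope.

(* Geometric armadillo tail with parameter 1/q, polygonal representation P.
   Squares are indexed by k >= 1 (index 0 is never used). *)

Definition arm_l (q : nat) (k : nat) : R := (/ INR q) ^ (k - 1).

Fixpoint arm_s (q : nat) (k : nat) : R :=
  match k with
  | O => 0
  | S k' => arm_s q k' + arm_l q (S k')
  end.

Definition pt := (R * R)%type.

(* The (topological) interior of P = \bigcup_{k>=1} [s_{k-1},s_k] x [0,l_k],
   written out: open squares, plus the open shared vertical edges
   {s_k} x (0, l_{k+1}) between consecutive squares. *)
Definition arm_interior (q : nat) (p : pt) : Prop :=
  (exists k, (1 <= k)%nat /\ arm_s q (k - 1) < fst p < arm_s q k
             /\ 0 < snd p < arm_l q k)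
  \/ (exists k, (1 <= k)%nat /\ fst p = arm_s q k
             /\ 0 < snd p < arm_l q (S k)).

(* The vertices of P (all of them become the single singular point). *)
Definition arm_vertex (q : nat) (p : pt) : Prop :=
  p = (0, 0) \/ p = (0, 1)
  \/ (exists k, (1 <= k)%nat /\
       (p = (arm_s q k, 0) \/ p = (arm_s q k, arm_l q k)
        \/ p = (arm_s q k, arm_l q (S k)))).

(* Edge gluings (on open edges, i.e. at non-singular points):
   top edge of square k glued to its bottom edge by vertical translation,
   and {s_k} x (l_{k+1}, l_k) glued to {0} x (l_{k+1}, l_k) horizontally.
   [arm_glued q p p'] : boundary point p is identified with boundary point p'. *)
Definition arm_glued_dir (q : nat) (p p' : pt) : Prop :=
  (exists k, (1 <= k)%nat /\ arm_s q (k - 1) < fst p < arm_s q k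
             /\ snd p = arm_l q k /\ p' = (fst p, 0))
  \/ (exists k, (1 <= k)%nat /\ fst p = arm_s q k
             /\ arm_l q (S k) < snd p < arm_l q k /\ p' = (0, snd p)).

Definition arm_glued (q : nat) (p p' : pt) : Prop :=
  arm_glued_dir q p p' \/ arm_glued_dir q p' p.

Definition pt_add (p : pt) (c : R) (v : pt) : pt :=
  (fst p + c * fst v, snd p + c * snd v).

(* A saddle connection in direction v starting at the singular point p0,
   given as a straight-line trajectory in P with the gluings: finitely many
   pieces i = 0..n, piece i starts at a i and has (parameter) length t i > 0;
   its relative interior lies in the interior of P (no singular point, no edge
   crossing needing a gluing); its endpoint is glued to the start of the next
   piece (at a non-singular point), and the endpoint of the last piece is a
   vertex, i.e. the singularity. *)
Definition arm_saddle_connection_from (q : nat) (p0 v : pt) : Prop :=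
  arm_vertex q p0 /\
  exists (n : nat) (a : nat -> pt) (t : nat -> R),
    a 0%nat = p0 /\
    (forall i, (i <= n)%nat -> 0 < t i /\
        forall c, 0 < c < t i -> arm_interior q (pt_add (a i) c v)) /\
    (forall i, (i < n)%nat -> arm_glued q (pt_add (a i) (t i) v) (a (S i))) /\
    arm_vertex q (pt_add (a n) (t n) v).

(* Main.v *)
Require Import Defs.
From Stdlib Require Import Reals.
From Stdlib Require Import Lra Lia Psatz Arith.
Open Scope R_scope.

Section S.
Variable q : nat.
Hypothesis hq : (2 <= q)%nat.
Let Q := INR q.
Let u := / Q.
Let w := / (2 * Q - 1).

Lemma HQ : 2 <= Q.
Proof. unfold Q. replace 2 with (INR 2) by (simpl; ring). apply le_INR; lia. Qed.
Lemma Hu : Q * u = 1.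
Proof. unfold u. field. pose proof HQ. lra. Qed.
Lemma Hw : (2*Q-1) * w = 1.
Proof. unfold w. field. pose proof HQ. lra. Qed.
Lemma Hup : 0 < u.
Proof. unfold u. apply Rinv_0_lt_compat. pose proof HQ. lra. Qed.
Lemma Hwp : 0 < w.
Proof. unfold w. apply Rinv_0_lt_compat. pose proof HQ. lra. Qed.

Lemma s1 : arm_s q 1 = 1. Proof. unfold arm_s, arm_l. simpl. ring. Qed.
Lemma s2 : arm_s q 2 = 1 + u. Proof. unfold arm_s, arm_l. simpl. fold Q u. ring. Qed.
Lemma s3 : arm_s q 3 = 1 + u + u*u. Proof. unfold arm_s, arm_l. simpl. fold Q u. ring. Qed.
Lemma s0 : arm_s q 0 = 0. Proof. reflexivity. Qed.
Lemma l1 : arm_l q 1 = 1. Proof. unfold arm_l. simpl. ring. Qed.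
Lemma l2 : arm_l q 2 = u. Proof. unfold arm_l. simpl. fold Q u. ring. Qed.
Lemma l3 : arm_l q 3 = u*u. Proof. unfold arm_l. simpl. fold Q u. ring. Qed.
Lemma l4 : arm_l q 4 = u*u*u. Proof. unfold arm_l. simpl. fold Q u. ring. Qed.

Definition ax (k s : nat) : pt :=
  let M := INR k + 1 in
  match s with
  | O => (0, M*u*w)
  | 1%nat => (0, (Q*Q+M)*u*w)
  | 2%nat => ((Q*Q-Q-M)*u*u, 0)
  | _ => ((Q*Q+Q-1-M)*u*u, 0)
  end.
Definition tx (k s : nat) : R :=
  let M := INR k + 1 in
  match s with
  | O => w
  | 1%nat => (Q*Q-Q-M)*u*u*w
  | 2%nat => u*u
  | _ => (M+1)*u*u*w
  end.
Definition aa (i : nat) : pt :=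
  match i with O => (1+u, 0) | S j => ax (j/4) (j mod 4) end.
Definition tt (i : nat) : R :=
  match i with O => u*u*w | S j => tx (j/4) (j mod 4) end.

Definition vv : pt := (2 * INR q - 1, INR q).

Ltac facts := cbn [fst snd]; pose proof HQ; pose proof Hu; pose proof Hw; pose proof Hup; pose proof Hwp.

Lemma int0 c : 0 < c < u*u*w -> arm_interior q (pt_add (1+u,0) c vv).
Proof.
  intros [h1 h2]. unfold pt_add, vv; simpl. fold Q. left. exists 3%nat.
  split; [lia|]. simpl (3-1)%nat. rewrite s2, s3, l3. facts.
  assert (wQ : w * Q < 1) by nra.
  split; split; nra.
Qed.
Lemma Mb k : (k + 2 <= q)%nat -> 1 <= INR k + 1 <= Q - 1.
Proof.
  intros h. pose proof (pos_INR k). apply le_INR in h. rewrite plus_INR in h.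
  simpl in h. fold Q in h. lra.
Qed.
Lemma Mb3 k : (k + 3 <= q)%nat -> INR k + 1 <= Q - 2.
Proof.
  intros h. apply le_INR in h. rewrite plus_INR in h.
  simpl in h. fold Q in h. lra.
Qed.

Lemma intp k s : (k+2 <= q)%nat -> (s = 3%nat -> (k+3 <= q)%nat) -> (s < 4)%nat ->
  0 < tx k s /\ forall c, 0 < c < tx k s -> arm_interior q (pt_add (ax k s) c vv).
Proof.
  intros hk h3 hs. pose proof (Mb k hk) as HM.
  destruct s as [|[|[|[|s]]]]; try lia; unfold tx, ax, pt_add, vv; fold Q;
  set (M := INR k + 1) in *; facts;
  assert (Mu : M * u < 1) by nra; assert (Mw : M * w < 1) by nra; assert (uh : u <= 1/2) by nra.
  - split; [lra|]. intros c [h1 h2]. left. exists 1%nat. split; [lia|].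
    simpl (1-1)%nat. rewrite s0, s1, l1. cbn [fst snd]. split; split; nra.
  - assert (e1 : (Q*Q-Q-M)*u*u*w*(2*Q-1) = 1 - u - M*u*u) by (unfold u, w; field; lra).
    assert (e2 : (Q*Q-Q-M)*u*u*w*Q + (Q*Q+M)*u*w = 1) by (unfold u, w; field; lra).
    assert (Tp : 0 < (Q*Q-Q-M)*u*u*w).
    { assert (Q*Q-Q-M > 0) by nra. assert (0 < u*u) by nra.
      apply Rmult_lt_0_compat; [|lra]. nra. }
    split; [exact Tp|].
    intros c [h1 h2]. left. exists 1%nat. split; [lia|].
    assert (g1 : c*(2*Q-1) < (Q*Q-Q-M)*u*u*w*(2*Q-1)) by (apply Rmult_lt_compat_r; lra).
    assert (g2 : c*Q < (Q*Q-Q-M)*u*u*w*Q) by (apply Rmult_lt_compat_r; lra).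
    assert (0 < M*u*u) by (apply Rmult_lt_0_compat; nra).
    assert (0 < (Q*Q+M)*u*w) by (apply Rmult_lt_0_compat; nra).
    simpl (1-1)%nat. rewrite s0, s1, l1. cbn [fst snd]. split; split; nra.
  - assert (e1 : (Q*Q-Q-M)*u*u = 1 - u - M*u*u) by (unfold u, w; field; lra).
    assert (e2 : u*u*(2*Q-1) = 2*u - u*u) by (unfold u, w; field; lra).
    assert (e3 : u*u*Q = u) by (unfold u, w; field; lra).
    split; [nra|]. intros c [h1 h2]. cbn [fst snd].
    assert (g1 : c*(2*Q-1) < u*u*(2*Q-1)) by (apply Rmult_lt_compat_r; lra).
    assert (g2 : c*Q < u*u*Q) by (apply Rmult_lt_compat_r; lra).
    assert (g3 : M*u*u < u) by nra.
    assert (g4 : 0 < c*(2*Q-1)) by nra.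
    assert (g5 : 0 < c*Q) by nra.
    destruct (Rtotal_order ((Q * Q - Q - M) * u * u + c * (2 * Q - 1)) 1) as [hx|[hx|hx]].
    + left. exists 1%nat. split; [lia|].
      simpl (1-1)%nat. rewrite s0, s1, l1. cbn [fst snd]. split; split; lra.
    + right. exists 1%nat. split; [lia|]. rewrite s1, l2. cbn [fst snd]. split; [lra|]. split; lra.
    + left. exists 2%nat. split; [lia|].
      simpl (2-1)%nat. rewrite s1, s2, l2. cbn [fst snd]. split; split; nra.
  - specialize (h3 eq_refl). pose proof (Mb3 k h3) as HM3. change (INR k + 1) with M in HM3.
    assert (e1 : (Q*Q+Q-1-M)*u*u = 1 + u - (M+1)*u*u) by (unfold u, w; field; lra).
    assert (e2 : (M+1)*u*u*w*(2*Q-1) = (M+1)*u*u) by (unfold u, w; field; lra).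
    assert (e3 : (M+1)*u*u*w*Q = (M+1)*u*w) by (unfold u, w; field; lra).
    assert (Tp : 0 < (M+1)*u*u*w).
    { assert (0 < u*u) by nra. apply Rmult_lt_0_compat; [|lra]. nra. }
    split; [exact Tp|].
    intros c [h1 h2].
    assert (g1 : c*(2*Q-1) < (M+1)*u*u*w*(2*Q-1)) by (apply Rmult_lt_compat_r; lra).
    assert (g2 : c*Q < (M+1)*u*u*w*Q) by (apply Rmult_lt_compat_r; lra).
    assert (g3 : (M+1)*u < 1).
    { assert ((M+1)*u <= (Q-1)*u) by (apply Rmult_le_compat_r; lra). nra. }
    assert (g3' : (M+1)*u*u < u) by nra.
    assert (g4 : (M+1)*w < 1).
    { assert ((M+1)*w <= (Q-1)*w) by (apply Rmult_le_compat_r; lra). nra. }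
    assert (g4' : (M+1)*u*w < u) by nra.
    assert (g5 : 0 < c*Q) by nra. assert (g6 : 0 < c*(2*Q-1)) by nra.
    left. exists 2%nat. split; [lia|].
    simpl (2-1)%nat. rewrite s1, s2, l2. cbn [fst snd]. split; split; lra.
Qed.

Lemma G0 : arm_glued q (pt_add (1+u,0) (u*u*w) vv) (ax 0 0).
Proof.
  unfold pt_add, vv, ax; fold Q. simpl INR. facts.
  assert (e1 : 1 + u + u*u*w*(2*Q-1) = 1 + u + u*u) by (unfold u, w; field; lra).
  assert (e2 : 0 + u*u*w*Q = (0+1)*u*w) by (unfold u, w; field; lra).
  left. right. exists 3%nat. split; [lia|]. rewrite s3, l3, l4. cbn [fst snd].
  rewrite e2. split; [exact e1|]. split; [|reflexivity].
  assert (u*u < w) by (unfold u, w; apply (Rmult_lt_reg_r (Q*Q*(2*Q-1))); [nra|]; field_simplify; nra || (field_simplify; nra)).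
  assert (w < u) by (unfold u, w; apply Rinv_lt_contravar; nra).
  split; nra.
Qed.

Lemma uuw : u*u < w.
Proof.
  pose proof HQ. unfold u, w. rewrite <- Rinv_mult. apply Rinv_lt_contravar; nra.
Qed.
Lemma wu : w < u.
Proof. pose proof HQ. unfold u, w; apply Rinv_lt_contravar; nra. Qed.

Lemma Gs k s : (k+2 <= q)%nat -> (2 <= s -> k+3 <= q)%nat -> (s < 4)%nat ->
  arm_glued q (pt_add (ax k s) (tx k s) vv)
    (match s with 3%nat => ax (S k) 0 | _ => ax k (S s) end).
Proof.
  intros hk h3 hs. pose proof (Mb k hk) as HM.
  pose proof uuw. pose proof wu.
  destruct s as [|[|[|[|s]]]]; try lia; unfold tx, ax, pt_add, vv; fold Q;
  set (M := INR k + 1) in *; facts.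
  - assert (e1 : 0 + w*(2*Q-1) = 1) by (unfold u, w; field; lra).
    assert (e2 : M*u*w + w*Q = (Q*Q+M)*u*w) by (unfold u, w; field; lra).
    left. right. exists 1%nat. split; [lia|]. rewrite s1, l1, l2. cbn [fst snd].
    rewrite e2. split; [exact e1|]. split; [|reflexivity].
    assert (P : 0 < u*w) by nra.
    assert (f1 : u = (2*Q-1)*(u*w)) by (unfold u, w; field; lra).
    assert (f2 : 1 = (2*Q*Q-Q)*(u*w)) by (unfold u, w; field; lra).
    replace ((Q*Q+M)*u*w) with ((Q*Q+M)*(u*w)) by ring.
    split.
    + rewrite f1 at 1. apply Rmult_lt_compat_r; nra.
    + rewrite f2. apply Rmult_lt_compat_r; nra.
  - assert (e1 : 0 + (Q*Q-Q-M)*u*u*w*(2*Q-1) = (Q*Q-Q-M)*u*u) by (unfold u, w; field; lra).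
    assert (e2 : (Q*Q+M)*u*w + (Q*Q-Q-M)*u*u*w*Q = 1) by (unfold u, w; field; lra).
    left. left. exists 1%nat. split; [lia|]. simpl (1-1)%nat. rewrite s0, s1, l1. cbn [fst snd].
    rewrite e1, e2. split; [|split; reflexivity].
    assert (e3 : (Q*Q-Q-M)*u*u = 1 - u - M*u*u) by (unfold u, w; field; lra).
    assert (M*u < 1).
    { assert (M*u <= (Q-1)*u) by (apply Rmult_le_compat_r; lra). nra. }
    split; nra.
  - assert (HM3 : M <= Q - 2) by (apply Mb3; lia).
    assert (e1 : (Q*Q-Q-M)*u*u + u*u*(2*Q-1) = 1 + (Q-1-M)*u*u) by (unfold u, w; field; lra).
    assert (e2 : 0 + u*u*Q = u) by (unfold u, w; field; lra).
    assert (e3 : (Q*Q+Q-1-M)*u*u = 1 + (Q-1-M)*u*u) by (unfold u, w; field; lra).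
    left. left. exists 2%nat. split; [lia|]. simpl (2-1)%nat. rewrite s1, s2, l2. cbn [fst snd].
    rewrite e1, e2, e3. split; [|split; reflexivity].
    assert ((Q-1-M)*u < 1).
    { assert ((Q-1-M)*u <= (Q-1)*u) by (apply Rmult_le_compat_r; lra). nra. }
    split; nra.
  - assert (HM3 : M <= Q - 2) by (apply Mb3; lia).
    assert (e1 : (Q*Q+Q-1-M)*u*u + (M+1)*u*u*w*(2*Q-1) = 1 + u) by (unfold u, w; field; lra).
    assert (e2 : 0 + (M+1)*u*u*w*Q = (INR (S k) + 1)*u*w) by (rewrite S_INR; fold M; unfold u, w; field; lra).
    left. right. exists 2%nat. split; [lia|]. rewrite s2, l2, l3. cbn [fst snd].
    rewrite e1, e2. split; [reflexivity|]. split; [|reflexivity].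
    rewrite S_INR. fold M.
    assert (g4 : (M+1)*w < 1).
    { assert ((M+1)*w <= (Q-1)*w) by (apply Rmult_le_compat_r; lra). nra. }
    assert (u*u = Q*u*u*w*(2*Q-1)*u) by (unfold u, w; field; lra).
    split; nra.
Qed.

Lemma Fin : arm_vertex q (pt_add (ax (q-2) 2) (tx (q-2) 2) vv).
Proof.
  assert (HM : INR (q-2) + 1 = Q - 1).
  { rewrite minus_INR by lia. fold Q. simpl. lra. }
  unfold ax, tx, pt_add, vv. fold Q. rewrite HM. facts.
  right. right. exists 1%nat. split; [lia|]. right. right.
  rewrite s1, l2. f_equal; unfold u, w; field; lra.
Qed.
End S.

Lemma dm j k s : j = (4*k+s)%nat -> (s < 4)%nat -> (j/4 = k /\ j mod 4 = s)%nat.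
Proof.
  intros. split. symmetry; apply (Nat.div_unique _ _ _ s); lia.
  symmetry; apply (Nat.mod_unique _ _ k); lia.
Qed.

Lemma decomp j : exists k s, j = (4*k+s)%nat /\ (s < 4)%nat /\ (j/4 = k)%nat /\ (j mod 4 = s)%nat.
Proof.
  exists (j/4)%nat, (j mod 4)%nat. pose proof (Nat.div_mod_eq j 4). pose proof (Nat.mod_upper_bound j 4).
  repeat split; lia.
Qed.

Theorem lemma3p1 (q : nat) (hq : (2 <= q)%nat) :
  arm_saddle_connection_from q (1 + / INR q, 0) (2 * INR q - 1, INR q).
Proof.
  split.
  { right. right. exists 2%nat. split; [lia|]. left. rewrite (s2 q). reflexivity. }
  exists (4*q-5)%nat, (aa q), (tt q).
  change (2 * INR q - 1, INR q) with (vv q).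
  split; [reflexivity|]. split; [|split].
  - intros [|j] hi.
    + split. { pose proof (Hup q hq). pose proof (Hwp q hq). simpl. 
               apply Rmult_lt_0_compat; [|assumption]. apply Rmult_lt_0_compat; assumption. }
      apply (int0 q hq).
    + destruct (decomp j) as (k & s & hj & hs & E1 & E2).
      unfold aa, tt. rewrite E1, E2.
      apply (intp q hq); lia.
  - intros [|j] hi.
    + exact (G0 q hq).
    + destruct (decomp j) as (k & s & hj & hs & E1 & E2).
      unfold aa, tt. rewrite E1, E2.
      destruct s as [|[|[|[|s]]]]; try lia.
      * destruct (dm (S j) k 1 ltac:(lia) ltac:(lia)) as [F1 F2]. rewrite F1, F2.
        apply (Gs q hq k 0); lia.
      * destruct (dm (S j) k 2 ltac:(lia) ltac:(lia)) as [F1 F2]. rewrite F1, F2.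
        apply (Gs q hq k 1); lia.
      * destruct (dm (S j) k 3 ltac:(lia) ltac:(lia)) as [F1 F2]. rewrite F1, F2.
        apply (Gs q hq k 2); lia.
      * destruct (dm (S j) (S k) 0 ltac:(lia) ltac:(lia)) as [F1 F2]. rewrite F1, F2.
        apply (Gs q hq k 3); lia.
  - replace (4*q-5)%nat with (S (4*(q-2)+2)) by lia.
    unfold aa, tt. destruct (dm (4*(q-2)+2) (q-2) 2 eq_refl ltac:(lia)) as [F1 F2].
    rewrite F1, F2. apply (Fin q hq).
Qed.
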